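(* Let $R$ be a commutative Noetherian ring of prime characteristic $p$, and let $G$ be an $x$-torsion-free left $R[x,f]$-module such that the set $\mathcal{I}(G)$ of $G$-special $R$-ideals is finite. Then there exists a uniquely determined ideal $\mathfrak{b}\in\mathcal{I}(G)$ with $\operatorname{height}\mathfrak{b}\ge1$ and $\mathfrak{b}\subset\mathfrak{c}$ for every other $\mathfrak{c}\in\mathcal{I}(G)$ with $\operatorname{height}\mathfrak{c}\ge1$. Moreover, for $g\in G$ the following are equivalent: (i) $g$ is annihilated by $\mathfrak{b}R[x,f]=\bigoplus_{n\ge0}\mathfrak{b}x^n$; (ii) there exists $c\in R^\circ\cap\mathfrak{b}$ with $cx^ng=0$ for all $n\gg0$; (iii) there exists $c\in R^\circ$ with $cx^ng=0$ for all $n\gg0$.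
   Context: $R[x,f]$ is the Frobenius skew polynomial ring: free left $R$-module on $(x^i)_{i\ge0}$, with $xr=r^px$. $G$ is $x$-torsion-free if $xg=0$ implies $g=0$. The graded annihilator $\operatorname{grann}N$ of an $R[x,f]$-submodule $N$ is the set of $\sum r_ix^i$ with each $r_ix^i$ annihilating $N$. An ideal $\mathfrak{b}$ of $R$ is $G$-special if $\operatorname{grann}N=\bigoplus_{n\ge0}\mathfrak{b}x^n$ for some $R[x,f]$-submodule $N$ of $G$; $\mathcal{I}(G)$ is the set of these. The improper ideal $R$ has infinite height. $R^\circ$ is the complement of the union of the minimal primes of $R$. *)

(* Defs.v *)
From HB Require Import structures.
From mathcomp Require Import all_boot all_algebra.
Set Implicit Arguments.
Unset Strict Implicit.
Unset Printing Implicit Defensive.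
Import GRing.Theory.
Local Open Scope ring_scope.

Section IdealTheory.
Variable R : comNzRingType.

Definition is_ideal (I : R -> Prop) : Prop :=
  [/\ I 0, (forall a b, I a -> I b -> I (a + b)) & (forall r a, I a -> I (r * a))].

Definition subid (I J : R -> Prop) : Prop := forall a, I a -> J a.
Definition eqid (I J : R -> Prop) : Prop := forall a, I a <-> J a.

Definition is_prime_ideal (P : R -> Prop) : Prop :=
  [/\ is_ideal P, ~ P 1 & forall a b, P (a * b) -> P a \/ P b].

Definition is_minimal_prime (P : R -> Prop) : Prop :=
  is_prime_ideal P /\ forall Q, is_prime_ideal Q -> subid Q P -> subid P Q.

Definition Rcirc (c : R) : Prop := forall P, is_minimal_prime P -> ~ P c.

Definition noetherian : Prop :=
  forall I : nat -> R -> Prop, (forall n, is_ideal (I n)) ->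
    (forall n, subid (I n) (I n.+1)) ->
    exists N, forall n, (N <= n)%N -> eqid (I n) (I N).

Definition prime_height_ge (P : R -> Prop) (n : nat) : Prop :=
  exists c : nat -> R -> Prop,
    [/\ (forall i, (i <= n)%N -> is_prime_ideal (c i)),
        (forall i, (i < n)%N -> subid (c i) (c i.+1) /\ ~ subid (c i.+1) (c i))
      & eqid (c n) P].

(* height I = inf of heights of primes containing I (= infinity for I = R);
   so height I >= n iff every prime containing I has height >= n *)
Definition height_ge (I : R -> Prop) (n : nat) : Prop :=
  forall P, is_prime_ideal P -> subid I P -> prime_height_ge P n.

End IdealTheory.

(* A left R[x,f]-module is an R-module G with an additive map xop : G -> G
   (the action of x) satisfying x (r g) = r^p (x g). *)
Section FrobMod.
Variables (R : comNzRingType) (p : nat) (G : lmodType R) (xop : G -> G).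

Definition frob_module : Prop :=
  (forall g h, xop (g + h) = xop g + xop h) /\
  (forall (r : R) g, xop (r *: g) = r ^+ p *: xop g).

Definition x_torsion_free : Prop := forall g, xop g = 0 -> g = 0.

Definition xpow (n : nat) (g : G) : G := iter n xop g.

Definition rxf_submodule (N : G -> Prop) : Prop :=
  [/\ N 0, (forall g h, N g -> N h -> N (g + h)),
      (forall (r : R) g, N g -> N (r *: g)) & (forall g, N g -> N (xop g))].

Definition ann_hom (N : G -> Prop) (n : nat) (r : R) : Prop :=
  forall g, N g -> r *: xpow n g = 0.

(* grann N = (+)_{n>=0} b x^n : the degree-n component of grann N is b, for all n *)
Definition grann_is (N : G -> Prop) (b : R -> Prop) : Prop :=
  forall n r, ann_hom N n r <-> b r.

Definition G_special (b : R -> Prop) : Prop :=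
  is_ideal b /\ exists N, rxf_submodule N /\ grann_is N b.

Definition special_finite : Prop :=
  exists (k : nat) (f : nat -> R -> Prop),
    forall b, G_special b -> exists2 i, (i < k)%N & eqid b (f i).

(* action of the element sum_i s_i x^i of R[x,f] on g *)
Definition skew_act (s : seq R) (g : G) : G :=
  \sum_(i < size s) s`_i *: xpow i g.

Definition ann_by_bRxf (b : R -> Prop) (g : G) : Prop :=
  forall s : seq R, (forall i, (i < size s)%N -> b s`_i) -> skew_act s g = 0.

End FrobMod.

(* Main.v *)
Require Import Defs.
From HB Require Import structures.
From mathcomp Require Import all_boot all_algebra.
From Stdlib Require Import Classical ClassicalEpsilon.
Import GRing.Theory.
Local Open Scope ring_scope.

Lemma nimp {A B : Prop} : ~ (A -> B) -> A /\ ~ B.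
Proof. by move=> H; split; [apply: NNPP => C; apply: H => /C | move=> b; apply: H]. Qed.

Section RingPart.
Set Implicit Arguments.
Unset Strict Implicit.
Variable R : comNzRingType.

Fixpoint prodin (L : seq (R -> Prop)) (Q : R -> Prop) : Prop :=
  match L with
  | [::] => Q 1
  | P :: L' => forall a, P a -> prodin L' (fun y => Q (a * y))
  end.

Lemma prodin_mono L : forall (Q Q' : R -> Prop), (forall y, Q y -> Q' y) ->
  prodin L Q -> prodin L Q'.
Proof.
elim: L => [|P L IH] Q Q' HQ /=; first by apply: HQ.
move=> H a Pa; apply: (IH (fun y => Q (a * y))); last exact: H.
by move=> y; apply: HQ.
Qed.

Lemma prodin_cat L1 L2 : forall (Q1 Q2 Q : R -> Prop),
  prodin L1 Q1 -> prodin L2 Q2 -> (forall u v, Q1 u -> Q2 v -> Q (u * v)) ->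
  prodin (L1 ++ L2) Q.
Proof.
elim: L1 => [|P L1 IH] Q1 Q2 Q /=.
  move=> H1 H2 HQ; apply: prodin_mono H2 => y Hy.
  by have := HQ 1 y H1 Hy; rewrite mul1r.
move=> H1 H2 HQ a Pa.
apply: (IH (fun y => Q1 (a * y)) Q2) => //; first exact: H1.
by move=> u v Hu Hv; rewrite mulrA; apply: HQ.
Qed.

Lemma prodin_prime L : forall (Q M : R -> Prop), is_prime_ideal M ->
  prodin L Q -> (forall y, Q y -> M y) ->
  exists2 P, List.In P L & subid P M.
Proof.
elim: L => [|P L IH] Q M HM /=.
  move=> H1 HQ; case: HM => _ H1M _; by case: H1M; apply: HQ.
move=> H HQ.
case: (classic (subid P M)) => [HPM|HPM]; first by exists P; [left|].
have [a Ha] : exists a, ~ (P a -> M a).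
  by apply: not_all_ex_not; exact: HPM.
have [Pa nMa] := nimp Ha.
have HQ' : forall y, Q (a * y) -> M y.
  move=> y /HQ; case: HM => _ _ Hp /Hp [//|//].
have [P' HP' HPM'] := IH (fun y => Q (a * y)) M HM (H a Pa) HQ'.
exists P' => //; by right.
Qed.

Definition goodI (I : R -> Prop) : Prop :=
  exists L, (forall P, List.In P L -> is_prime_ideal P /\ subid I P) /\ prodin L I.

Lemma bad_step (I : R -> Prop) : is_ideal I -> ~ goodI I ->
  exists J, [/\ is_ideal J, subid I J, ~ subid J I & ~ goodI J].
Proof.
move=> HI Hbad.
have n1 : ~ I 1.
  by move=> I1; apply: Hbad; exists [::]; split.
have nprime : ~ (forall a b, I (a * b) -> I a \/ I b).
  move=> Hp; apply: Hbad; exists [:: I]; split.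
    by move=> P [<-|[]]; split => //; split.
  by move=> a Ia /=; rewrite mulr1.
have [a Ha] := not_all_ex_not _ _ nprime.
have [b Hb] := not_all_ex_not _ _ Ha.
have [Iab [nIa nIb]] : I (a * b) /\ ~ I a /\ ~ I b.
  case: (classic (I (a * b))) => Iab; last by case: Hb => H; case: Iab.
  split=> //; split=> Hx; apply: Hb => _; tauto.
case: HI => I0 ID IM.
pose Ja := fun y => exists i r, I i /\ y = i + r * a.
pose Jb := fun y => exists i r, I i /\ y = i + r * b.
have idealJ : forall c, is_ideal (fun y => exists i r, I i /\ y = i + r * c).
  move=> c; split.
  - by exists 0, 0; rewrite mul0r addr0.
  - move=> x y [i [r [Ii ->]]] [j [s [Ij ->]]]; exists (i + j), (r + s).
    by split; [apply: ID | rewrite mulrDl addrACA].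
  - move=> s x [i [r [Ii ->]]]; exists (s * i), (s * r).
    by split; [apply: IM | rewrite mulrDr mulrA].
have subJ : forall c, subid I (fun y => exists i r, I i /\ y = i + r * c).
  by move=> c x Ix; exists x, 0; rewrite mul0r addr0.
have strJ : forall c, ~ I c -> ~ subid (fun y => exists i r, I i /\ y = i + r * c) I.
  by move=> c nc H; apply: nc; apply: H; exists 0, 1; rewrite add0r mul1r.
case: (classic (goodI Ja)) => Ga; last by exists Ja; split => //; [apply: (idealJ a)|apply: (subJ a)|apply: (strJ a)].
case: (classic (goodI Jb)) => Gb; last by exists Jb; split => //; [apply: (idealJ b)|apply: (subJ b)|apply: (strJ b)].
case: Hbad; case: Ga => La [HLa Pa]; case: Gb => Lb [HLb Pb].
exists (La ++ Lb); split.
  move=> P /List.in_app_iff [/HLa|/HLb] [HP HsP]; split => // x Ix; apply: HsP.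
    exact: (subJ a).
  exact: (subJ b).
apply: (prodin_cat Pa Pb).
move=> u v [i [r [Ii ->]]] [j [s [Ij ->]]].
rewrite mulrDl !mulrDr.
apply: (ID); first by apply: (ID); [rewrite mulrC; apply: (IM) | rewrite mulrC; apply: (IM)].
apply: (ID); first by apply: (IM).
have -> : r * a * (s * b) = (r * s) * (a * b) by rewrite mulrACA.
by apply: (IM).
Qed.

Lemma all_good : noetherian R -> forall I, is_ideal I -> goodI I.
Proof.
move=> HN I0 HI0; apply: NNPP => Hb0.
pose bad := {I : R -> Prop | is_ideal I /\ ~ goodI I}.
have step : forall X : bad, {Y : bad | subid (sval X) (sval Y) /\ ~ subid (sval Y) (sval X)}.
  move=> [X [HX HbX]]; apply: constructive_indefinite_description.
  have [J [HJ HXJ HJX HbJ]] := bad_step HX HbX.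
  by exists (exist _ J (conj HJ HbJ)).
pose stepf := fun X => sval (step X).
pose ch := fun n => iter n stepf (exist _ I0 (conj HI0 Hb0)).
have [N HNn] := HN (fun n => sval (ch n)) (fun n => proj1 (svalP (ch n)))
  (fun n => proj1 (svalP (step (ch n)))).
have := HNn N.+1 (leqnSn N).
have := proj2 (svalP (step (ch N))).
move=> H1 H2; apply: H1 => x Hx; apply/H2; exact: Hx.
Qed.

Lemma min_prime_in_list : noetherian R ->
  exists L : seq (R -> Prop), forall M, is_minimal_prime M ->
    exists2 P, List.In P L & eqid P M /\ is_minimal_prime P.
Proof.
move=> HN.
have HI0 : is_ideal (fun y : R => y = 0).
  by split=> // [a b -> ->|r a ->]; rewrite ?addr0 ?mulr0.
have [L [HL PL]] := all_good HN HI0.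
exists L => M [HM Hmin].
have H0M : forall y : R, y = 0 -> M y by move=> y ->; case: HM => [[]].
have [P InP HPM] := prodin_prime HM PL H0M.
  have [HP _] := HL P InP.
  have HMP := Hmin P HP HPM.
  exists P => //; split; first by move=> a; split; [apply: HPM|apply: HMP].
  split => // Q HQ HQP; move=> a Pa; apply: (Hmin Q HQ).
    by move=> x /HQP /HPM.
  by apply: HPM.
Qed.

Lemma avoid_aux (P : R -> Prop) (L : seq (R -> Prop)) : is_prime_ideal P ->
  (forall Q, List.In Q L -> is_minimal_prime Q -> ~ subid Q P) ->
  exists d, ~ P d /\ forall Q, List.In Q L -> is_minimal_prime Q -> Q d.
Proof.
move=> HP; elim: L => [|Q L IH] HL.
  exists 1; split => //; by case: HP.
have [d [nPd Hd]] : exists d, ~ P d /\ forall Q, List.In Q L -> is_minimal_prime Q -> Q d.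
  by apply: IH => Q' H; apply: HL; right.
case: (classic (is_minimal_prime Q)) => HQ.
  have [y Hy] := not_all_ex_not _ _ (HL Q (or_introl erefl) HQ).
  have [Qy nPy] := nimp Hy.
  exists (y * d); split.
    case: HP => _ _ Hp /Hp [//|//].
  move=> Q' HIn HmQ'; case: HIn => [EQ|HQ'].
    rewrite -EQ; case: HQ => [[[_ _ IM] _ _] _]; rewrite mulrC; by apply: IM.
  by case: (HmQ') => [[[_ _ IM] _ _] _]; apply: IM; apply: Hd.
exists d; split => // Q' [<- //|]; exact: Hd.
Qed.

Lemma avoidance (b : R -> Prop) (L : seq (R -> Prop)) : is_ideal b ->
  (forall Q, is_minimal_prime Q -> ~ subid b Q) ->
  exists c, b c /\ forall Q, List.In Q L -> is_minimal_prime Q -> ~ Q c.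
Proof.
move=> Hb Hnm; elim: L => [|P L IH].
  by exists 0; split => //; case: Hb.
have [c [bc Hc]] := IH.
case: (classic (is_minimal_prime P)) => HmP; last first.
  exists c; split => // Q [<- //|]; exact: Hc.
case: (classic (P c)) => Pc; last first.
  exists c; split => // Q [<- //|]; exact: Hc.
have HPp := proj1 HmP.
have Hinc : forall Q, List.In Q L -> is_minimal_prime Q -> ~ subid Q P.
  move=> Q HQ HmQ HQP.
  have HPQ := proj2 HmP Q (proj1 HmQ) HQP.
  by apply: (Hc Q HQ HmQ); apply: HPQ.
have [d [nPd Hd]] := avoid_aux HPp Hinc.
have [a Ha] := not_all_ex_not _ _ (Hnm P HmP).
have [ba nPa] := nimp Ha.
case: Hb => b0 bD bM.
have nPad : ~ P (a * d) by case: HPp => _ _ Hp /Hp [].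
exists (c + a * d); split.
  by apply: bD => //; rewrite mulrC; apply: bM.
have ideal_sub : forall Q : R -> Prop, is_ideal Q -> forall u v, Q (u + v) -> Q u -> Q v.
  move=> Q [_ QD QM] u v Huv Hu.
  have := QD _ _ Huv (QM (-1) u Hu).
  by rewrite mulN1r addrC addKr.
move=> Q HIn HmQ HQc; case: HIn => [EQ|HQ].
  by apply: nPad; rewrite -EQ in HQc; case: (HPp) => HPi _ _; apply: (ideal_sub P HPi c) => //.
apply: (Hc Q HQ HmQ).
have HQi : is_ideal Q by case: HmQ => [[]].
have Qad : Q (a * d) by case: HQi => _ _ QM; apply: QM; apply: Hd.
have := ideal_sub Q HQi (a * d) c; rewrite addrC; apply => //.
Qed.

Lemma Rcirc_exists (b : R -> Prop) : noetherian R -> is_ideal b -> height_ge b 1 ->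
  exists c, b c /\ Rcirc c.
Proof.
move=> HN Hb Hh.
have [L HL] := min_prime_in_list HN.
have Hnm : forall Q, is_minimal_prime Q -> ~ subid b Q.
  move=> Q [HQ Hmin] HbQ.
  have [ch [Hp Hs He]] := Hh Q HQ HbQ.
  have [Hs0 Hn0] := Hs 0%N erefl.
  apply: Hn0 => x Hx.
  have Qx : Q x by apply/He.
  by apply: (Hmin (ch 0%N) (Hp 0%N erefl)) => // y Hy; apply/He; apply: Hs0.
have [c [bc Hc]] := avoidance L Hb Hnm.
exists c; split => // M HM Mc.
have [P InP [HPM HmP]] := HL M HM.
by apply: (Hc P InP HmP); apply/HPM.
Qed.

End RingPart.

Section ModPart.
Set Implicit Arguments.
Unset Strict Implicit.
Variables (R : comNzRingType) (p : nat) (G : lmodType R) (xop : G -> G).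
Hypothesis Hp : (0 < p)%N.
Hypothesis Hf : frob_module p xop.
Hypothesis Ht : x_torsion_free xop.

Lemma xpowS n g : xpow xop n.+1 g = xop (xpow xop n g).
Proof. by []. Qed.

Lemma xop0 : xop 0 = 0.
Proof.
case: Hf => HD _; have := HD 0 0; rewrite addr0 => /eqP.
by rewrite -subr_eq subrr eq_sym => /eqP.
Qed.

Lemma xpowD n g h : xpow xop n (g + h) = xpow xop n g + xpow xop n h.
Proof. by elim: n => [|n IH] //; rewrite !xpowS IH; case: Hf. Qed.

Lemma xpow0 n : xpow xop n 0 = 0.
Proof. by elim: n => [|n IH] //; rewrite xpowS IH xop0. Qed.

Lemma xpowZ n (r : R) g : xpow xop n (r *: g) = r ^+ ((p ^ n)%N) *: xpow xop n g.
Proof.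
elim: n => [|n IH]; first by rewrite expn0 expr1.
rewrite !xpowS IH.
by case: Hf => _ ->; rewrite -exprM expnSr.
Qed.

Lemma xpow_tf n g : xpow xop n g = 0 -> g = 0.
Proof.
elim: n g => [|n IH] g //.
rewrite xpowS => /Ht; exact: IH.
Qed.

Lemma xpow_xpow m n g : xpow xop m (xpow xop n g) = xpow xop (m + n) g.
Proof. by rewrite /xpow iterD. Qed.

Definition annS (N : G -> Prop) : R -> Prop := fun r => forall g, N g -> r *: g = 0.

Lemma annS_ideal N : is_ideal (annS N).
Proof.
split.
- by move=> g _; rewrite scale0r.
- by move=> a b Ha Hb g Ng; rewrite scalerDl Ha ?Hb ?addr0.
- by move=> r a Ha g Ng; rewrite -scalerA Ha ?scaler0.
Qed.

Lemma sub_xpow N n g : rxf_submodule xop N -> N g -> N (xpow xop n g).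
Proof.
case=> _ _ _ HX; elim: n => [|n IH] // Ng.
by rewrite xpowS; apply: HX; apply: IH.
Qed.

Lemma pow_in_ideal (b : R -> Prop) r n : is_ideal b -> b r -> b (r ^+ (p ^ n)%N).
Proof.
case=> _ _ IM br.
have : (0 < (p ^ n)%N)%N by rewrite expn_gt0 Hp.
case: ((p ^ n)%N) => [//|k] _; rewrite exprSr; exact: IM.
Qed.

Lemma sub_grann N : rxf_submodule xop N -> grann_is xop N (annS N).
Proof.
move=> HN n r; split.
  move=> H g Ng; apply: (@xpow_tf n).
  rewrite xpowZ.
  have : (0 < (p ^ n)%N)%N by rewrite expn_gt0 Hp.
  case: ((p ^ n)%N) => [//|k] _; rewrite exprSr -scalerA H // scaler0 //.
move=> H g Ng; apply: H; exact: sub_xpow.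
Qed.

Lemma sub_special N : rxf_submodule xop N -> G_special xop (annS N).
Proof. move=> HN; split; first exact: annS_ideal. by exists N; split => //; apply: sub_grann. Qed.

Lemma special_ann b : G_special xop b -> exists N, rxf_submodule xop N /\ eqid b (annS N).
Proof.
case=> _ [N [HN Hg]]; exists N; split => // r; split.
  by move=> /(Hg 0%N r) H g Ng; apply: H.
by move=> H; apply/(Hg 0%N r) => g Ng; apply: H.
Qed.

Lemma special_eqid b c : G_special xop b -> eqid b c -> G_special xop c.
Proof.
move=> [[b0 bD bM] [N [HN Hg]]] Hbc; split.
  split; first by apply/Hbc.
  - by move=> x y /Hbc Hx /Hbc Hy; apply/Hbc; apply: bD.
  - by move=> r x /Hbc Hx; apply/Hbc; apply: bM.
exists N; split => // n r; split; first by move=> /(Hg n r) /Hbc.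
by move=> /Hbc /(Hg n r).
Qed.

End ModPart.

Lemma height_mono (R : comNzRingType) (I J : R -> Prop) n :
  subid I J -> height_ge I n -> height_ge J n.
Proof. by move=> HIJ HI P HP HJP; apply: HI => // x /HIJ /HJP. Qed.

Lemma xpowSr (R : comNzRingType) (G : lmodType R) (xop : G -> G) n g :
  xpow xop n (xop g) = xpow xop n.+1 g.
Proof. by rewrite /xpow iterSr. Qed.

Theorem theorem3p12 (R : comNzRingType) (p : nat) (G : lmodType R) (xop : G -> G) :
  p \in [pchar R] ->
  noetherian R ->
  frob_module p xop ->
  x_torsion_free xop ->
  special_finite xop ->
  exists b : R -> Prop,
    [/\ G_special xop b,
        height_ge b 1,
        (forall c, G_special xop c -> height_ge c 1 -> subid b c),
        (forall b', G_special xop b' -> height_ge b' 1 ->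
            (forall c, G_special xop c -> height_ge c 1 -> subid b' c) -> eqid b' b)
      & forall g : G,
          (ann_by_bRxf xop b g <->
             exists c : R, [/\ Rcirc c, b c &
               exists N, forall n, (N <= n)%N -> c *: xpow xop n g = 0]) /\
          ((exists c : R, [/\ Rcirc c, b c &
               exists N, forall n, (N <= n)%N -> c *: xpow xop n g = 0]) <->
           (exists c : R, Rcirc c /\
               exists N, forall n, (N <= n)%N -> c *: xpow xop n g = 0))].
Proof.
move=> Hch HN Hf Ht [k [f Hfin]].
have Hp : (0 < p)%N by apply: prime_gt0; apply: pcharf_prime Hch.
pose b := fun r : R => forall c, G_special xop c -> height_ge c 1 -> c r.
have build : forall m, exists N, [/\ rxf_submodule xop N, height_ge (annS N) 1 &
    forall r, annS N r <-> (forall i, (i < m)%N -> G_special xop (f i) ->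
                                 height_ge (f i) 1 -> f i r)].
  elim => [|m [N [HNs HNh HNr]]].
    exists (fun y => y = 0); split.
    - split => //.
      + by move=> g h -> ->; rewrite addr0.
      + by move=> r g ->; rewrite scaler0.
      + by move=> g ->; rewrite (xop0 Hf).
    - move=> P [_ nP1 _] HP; exfalso; apply: nP1; apply: HP => g ->.
      by rewrite scaler0.
    - by move=> r; split => // _ g ->; rewrite scaler0.
  case: (classic (G_special xop (f m) /\ height_ge (f m) 1)) => [[Sm Hm]|nS].
    have [N' [HN' Hm']] := special_ann Sm.
    pose N2 := fun y => exists u v, N u /\ N' v /\ y = u + v.
    have Hsum : forall r, annS N2 r <-> annS N r /\ annS N' r.
      move=> r; split.
        move=> H; split => g Hg; apply: H.
          by exists g, 0; do !split => //; [case: HN' | rewrite addr0].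
        by exists 0, g; do !split => //; [case: HNs | rewrite add0r].
      move=> [H1 H2] g [u [v [Nu [N'v ->]]]].
      by rewrite scalerDr H1 // H2 // addr0.
    exists N2; split.
    - case: HNs => N0 ND NZ NX; case: HN' => N'0 N'D N'Z N'X; split.
      + by exists 0, 0; rewrite addr0.
      + move=> g h [u [v [Nu [N'v ->]]]] [u' [v' [Nu' [N'v' ->]]]].
        exists (u + u'), (v + v'); do !split; [exact: ND | exact: N'D | by rewrite addrACA].
      + move=> r g [u [v [Nu [N'v ->]]]].
        exists (r *: u), (r *: v); do !split; [exact: NZ | exact: N'Z | by rewrite scalerDr].
      + move=> g [u [v [Nu [N'v ->]]]].
        exists (xop u), (xop v); do !split; [exact: NX | exact: N'X | by case: Hf].
    - move=> P HP HsP.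
      case: (classic (subid (annS N) P)) => H1; first exact: HNh.
      case: (classic (subid (f m) P)) => H2; first exact: Hm.
      exfalso.
      have [a Ha] := not_all_ex_not _ _ H1.
      have [a1 a2] := nimp Ha.
      have [c Hc] := not_all_ex_not _ _ H2.
      have [c1 c2] := nimp Hc.
      have Hac : annS N2 (a * c).
        apply/Hsum; split.
          by case: (annS_ideal N) => _ _ IM; rewrite mulrC; apply: IM.
        apply/Hm'; case: Sm => [[_ _ IM] _]; exact: IM.
      have := HsP _ Hac; case: HP => _ _ Hpr /Hpr [] //.
    - move=> r; split.
        move=> /Hsum [H1 H2] i; rewrite ltnS leq_eqVlt => /orP [/eqP -> _ _|Hi].
          by apply/Hm'.
        by move: H1 => /HNr; apply.
      move=> H; apply/Hsum; split.
        by apply/HNr => i Hi; apply: H; apply: ltnW.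
      by apply/Hm'; apply: H.
  exists N; split => // r; split.
    move=> /HNr H i; rewrite ltnS leq_eqVlt => /orP [/eqP -> Sm Hm|Hi].
      by exfalso; apply: nS.
    exact: H.
  by move=> H; apply/HNr => i Hi; apply: H; apply: ltnW.
have [N0 [HN0s HN0h HN0r]] := build k.
have Hb_eq : eqid (annS N0) b.
  move=> r; split; last first.
    by move=> Hr; apply: Hr; [exact: (sub_special Hp Hf Ht HN0s) | exact: HN0h].
  move=> Hr c Sc Hc; have [i ik Hci] := Hfin c Sc.
  apply/Hci; apply: (proj1 (HN0r r) Hr i ik).
    exact: special_eqid Sc Hci.
  by apply: height_mono Hc => x /Hci.
have Sb : G_special xop b := special_eqid (sub_special Hp Hf Ht HN0s) Hb_eq.
have Hbh : height_ge b 1 by apply: height_mono HN0h => x /Hb_eq.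
have bmin : forall c, G_special xop c -> height_ge c 1 -> subid b c.
  by move=> c Sc Hc r Hr; apply: Hr.
have Hbi : is_ideal b by case: Sb.
exists b; split => //.
  move=> b' Sb' Hb' Hmin r; split.
    by move=> Hr c Sc Hc; exact: (Hmin c Sc Hc r Hr).
  by move=> Hr; exact: (Hr b' Sb' Hb').
move=> g.
have iii_i : (exists c, Rcirc c /\ exists N, forall n, (N <= n)%N -> c *: xpow xop n g = 0) ->
    forall r n, b r -> r *: xpow xop n g = 0.
  move=> [c [Rc [N HcN]]].
  pose T := fun y => forall M, rxf_submodule xop M -> M (xpow xop N g) -> M y.
  have HT : rxf_submodule xop T.
    split.
    - by move=> M [M0 _ _ _] _.
    - by move=> y z Ty Tz M HM HMg; case: (HM) => _ MD _ _; apply: MD; [apply: Ty|apply: Tz].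
    - by move=> r y Ty M HM HMg; case: (HM) => _ _ MZ _; apply: MZ; apply: Ty.
    - by move=> y Ty M HM HMg; case: (HM) => _ _ _ MX; apply: MX; apply: Ty.
  have TN : T (xpow xop N g) by [].
  have cT : annS T c.
    move=> y Ty.
    have HM : rxf_submodule xop (fun y => forall n, c *: xpow xop n y = 0).
      split.
      - by move=> n0; rewrite (xpow0 Hf) scaler0.
      - by move=> y1 y2 H1 H2 n0; rewrite (xpowD Hf) scalerDr H1 H2 addr0.
      - by move=> r1 y1 H1 n0; rewrite (xpowZ Hf) scalerA mulrC -scalerA H1 scaler0.
      - by move=> y1 H1 n0; rewrite xpowSr H1.
    have H0 : forall n, c *: xpow xop n (xpow xop N g) = 0.
      by move=> n0; rewrite xpow_xpow; apply: HcN; apply: leq_addl.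
    exact: (Ty _ HM H0 0%N).
  have Th : height_ge (annS T) 1.
    move=> P HP HsP.
    have cP := HsP c cT.
    have nmin : ~ is_minimal_prime P by move=> Hm; exact: Rc P Hm cP.
    have [Q [HQ HQP nPQ]] : exists Q, [/\ is_prime_ideal Q, subid Q P & ~ subid P Q].
      apply: NNPP => C; apply: nmin; split => // Q HQ HQP; apply: NNPP => nPQ.
      by apply: C; exists Q; split.
    exists (fun i => if i == 0%N then Q else P); split.
    - by move=> i; case: (i == 0%N).
    - by move=> i; rewrite ltnS leqn0 => /eqP -> /=.
    - by move=> a.
  have bT : subid b (annS T) := bmin _ (sub_special Hp Hf Ht HT) Th.
  have Hhigh : forall r', b r' -> forall m, r' *: xpow xop (m + N) g = 0.
    move=> r' br' m; rewrite -xpow_xpow; apply: (bT r' br' (xpow xop m (xpow xop N g))); exact: sub_xpow HT TN.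
  move=> r n br.
  apply: (xpow_tf Ht (n:=N)).
  rewrite (xpowZ Hf) xpow_xpow addnC.
  exact: (Hhigh _ (pow_in_ideal Hp N Hbi br) n).
have i_equiv : ann_by_bRxf xop b g <-> forall r n, b r -> r *: xpow xop n g = 0.
  split.
    move=> H r n br.
    have := H (rcons (nseq n 0) r).
    rewrite /skew_act size_rcons size_nseq big_ord_recr /= nth_rcons size_nseq ltnn eqxx.
    rewrite big1 ?add0r.
        apply.
        move=> i _; rewrite nth_rcons size_nseq nth_nseq.
        have b0 : b 0 by case: Hbi.
        by case: ifP => _; case: ifP.
    move=> i _ /=; rewrite nth_rcons size_nseq nth_nseq (ltn_ord i) scale0r //.
  move=> H s Hs; rewrite /skew_act big1 // => i _; apply: H; apply: Hs; exact: ltn_ord.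
have i_ii : (forall r n, b r -> r *: xpow xop n g = 0) ->
    exists c, [/\ Rcirc c, b c & exists N, forall n, (N <= n)%N -> c *: xpow xop n g = 0].
  move=> H; have [c [bc Rc]] := Rcirc_exists HN Hbi Hbh.
  by exists c; split => //; exists 0%N => n _; apply: H.
split; split.
- by move/i_equiv; exact: i_ii.
- move=> [c [Rc bc HcN]]; apply/i_equiv; apply: iii_i; by exists c; split.
- by move=> [c [Rc bc HcN]]; exists c; split.
- by move=> H; apply: i_ii; exact: iii_i H.
Qed.
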